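(* A commuting pair $(S,P)$ of operators on a Hilbert space is a $\Gamma$-contraction if and only if $(0,S,P)$ is a $\mathbb P$-contraction.
   Context: The pentablock is $\mathbb P=\{(a_{21},\operatorname{tr}A_0,\det A_0): A_0=[a_{ij}]\in M_2(\mathbb C),\ \|A_0\|<1\}\subset\mathbb C^3$ and $\Gamma=\{(z_1+z_2,z_1z_2):z_1,z_2\in\overline{\mathbb D}\}$. A compact $K$ is a spectral set for a commuting tuple if the Taylor joint spectrum lies in $K$ and $\|f(\underline T)\|\le\sup_K|f|$ for every rational $f$ with no poles in $K$. A $\mathbb P$-contraction (resp. $\Gamma$-contraction) is a commuting triple (resp. pair) having $\overline{\mathbb P}$ (resp. $\Gamma$) as a spectral set. *)

(* Defs.v *)
From HB Require Import structures.
From mathcomp Require Import all_boot all_order all_algebra.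
From mathcomp Require Import reals complex.
From mathcomp Require Import mpoly.
Set Implicit Arguments. Unset Strict Implicit. Unset Printing Implicit Defensive.
Import Order.TTheory GRing.Theory Num.Theory.
Local Open Scope ring_scope.
Local Open Scope complex_scope.

Record hilbert_space (R : realType) (H : lmodType R[i]) := HilbertSpace {
  ip : H -> H -> R[i];
  ip_linl : forall (a : R[i]) (x y z : H), ip (a *: x + y) z = a * ip x z + ip y z;
  ip_csym : forall x y : H, ip y x = (ip x y)^*;
  ip_ge0 : forall x : H, 0 <= ip x x;
  ip_def : forall x : H, ip x x = 0 -> x = 0;
  ip_complete : forall u : nat -> H,
    (forall e : R, 0 < e -> exists N : nat, forall m n : nat, (N <= m)%N -> (N <= n)%N ->
        Num.sqrt (complex.Re (ip (u m - u n) (u m - u n))) < e) ->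
    exists l : H, forall e : R, 0 < e -> exists N : nat, forall n : nat, (N <= n)%N ->
        Num.sqrt (complex.Re (ip (u n - l) (u n - l))) < e
}.

Definition hnorm (R : realType) (H : lmodType R[i]) (hs : hilbert_space H) (x : H) : R :=
  Num.sqrt (complex.Re (ip hs x x)).

Definition is_bounded_op (R : realType) (H : lmodType R[i]) (hs : hilbert_space H)
  (T : H -> H) : Prop :=
  (forall (a : R[i]) (x y : H), T (a *: x + y) = a *: T x + T y) /\
  (exists M : R, forall x : H, hnorm hs (T x) <= M * hnorm hs x).

Definition commuting_tuple (R : realType) (H : lmodType R[i]) (hs : hilbert_space H)
  (n : nat) (T : 'I_n -> H -> H) : Prop :=
  (forall i, is_bounded_op hs (T i)) /\
  (forall i j (x : H), T i (T j x) = T j (T i x)).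

(* Cochains: functions from subsets S of 'I_n to H (the degree of the component
   at S is #|S|). *)
Definition koszul_d (R : realType) (H : lmodType R[i]) (n : nat) (A : 'I_n -> H -> H)
  (w : {set 'I_n} -> H) : {set 'I_n} -> H :=
  fun S => \sum_(i in S) ((-1) ^+ #|[set j in S | (j < i)%N]|) *: A i (w (S :\ i)).

Definition koszul_exact (R : realType) (H : lmodType R[i]) (n : nat) (A : 'I_n -> H -> H) : Prop :=
  forall w : {set 'I_n} -> H, koszul_d A w = (fun _ => 0) ->
    exists v : {set 'I_n} -> H, koszul_d A v = w.

Definition taylor_spectrum (R : realType) (H : lmodType R[i]) (n : nat) (T : 'I_n -> H -> H)
  (lam : 'I_n -> R[i]) : Prop :=
  ~ koszul_exact (fun i x => T i x - lam i *: x).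

Definition mono_op (R : realType) (H : lmodType R[i]) (n : nat) (T : 'I_n -> H -> H)
  (m : 'X_{1..n}) (x : H) : H :=
  foldr (fun i y => iter (m i) (T i) y) x (enum 'I_n).

Definition poly_op (R : realType) (H : lmodType R[i]) (n : nat) (p : {mpoly R[i][n]})
  (T : 'I_n -> H -> H) (x : H) : H :=
  \sum_(m <- msupp p) p@_m *: mono_op T m x.

(* K is a spectral set for T: the Taylor spectrum lies in K and, for every rational
   f = p/q with no poles in K (q nonvanishing on K), ||f(T)|| <= sup_K |f|, where
   f(T) = p(T) q(T)^{-1}; "||f(T)|| <= sup_K |f|" is written as: for every upper
   bound M of |f| on K, ||f(T) x|| <= M ||x|| for all x. *)
Definition spectral_set (R : realType) (H : lmodType R[i]) (hs : hilbert_space H)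
  (n : nat) (K : ('I_n -> R[i]) -> Prop) (T : 'I_n -> H -> H) : Prop :=
  (forall lam, taylor_spectrum T lam -> K lam) /\
  (forall p q : {mpoly R[i][n]}, (forall z, K z -> q.@[z] != 0) ->
    forall Qinv : H -> H,
      (forall x, Qinv (poly_op q T x) = x /\ poly_op q T (Qinv x) = x) ->
    forall M : R, (forall z, K z -> Normc.normc (p.@[z] / q.@[z]) <= M) ->
    forall x : H, hnorm hs (poly_op p T (Qinv x)) <= M * hnorm hs x).

Definition Gamma (R : realType) : ('I_2 -> R[i]) -> Prop :=
  fun v => exists z1 z2 : R[i], Normc.normc z1 <= 1 /\ Normc.normc z2 <= 1 /\
    v ord0 = z1 + z2 /\ v ord_max = z1 * z2.

Definition vnorm2 (R : realType) (u : 'cV[R[i]]_2) : R :=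
  \sum_(i < 2) complex.Re (u i ord0 * (u i ord0)^*).

Definition mx_norm_lt1 (R : realType) (A : 'M[R[i]]_2) : Prop :=
  exists r : R, 0 <= r /\ r < 1 /\
    forall u : 'cV[R[i]]_2, Num.sqrt (vnorm2 (A *m u)) <= r * Num.sqrt (vnorm2 u).

Definition pentablock (R : realType) : ('I_3 -> R[i]) -> Prop :=
  fun v => exists A : 'M[R[i]]_2, mx_norm_lt1 A /\
    v ord0 = A (lift ord0 ord0) ord0 /\ v (lift ord0 ord0) = \tr A /\ v ord_max = \det A.

Definition pentablock_closure (R : realType) : ('I_3 -> R[i]) -> Prop :=
  fun v => forall e : R, 0 < e -> exists w, pentablock w /\ forall i, Normc.normc (v i - w i) < e.

Definition pair_op (R : realType) (H : lmodType R[i]) (S P : H -> H) : 'I_2 -> H -> H :=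
  fun i => if val i == 0%N then S else P.

Definition triple_op (R : realType) (H : lmodType R[i]) (A S P : H -> H) : 'I_3 -> H -> H :=
  fun i => match val i with 0%N => A | 1%N => S | _ => P end.

Definition gamma_contraction (R : realType) (H : lmodType R[i]) (hs : hilbert_space H)
  (S P : H -> H) : Prop :=
  commuting_tuple hs (pair_op S P) /\ spectral_set hs (@Gamma R) (pair_op S P).

Definition penta_contraction (R : realType) (H : lmodType R[i]) (hs : hilbert_space H)
  (A S P : H -> H) : Prop :=
  commuting_tuple hs (triple_op A S P) /\
  spectral_set hs (@pentablock_closure R) (triple_op A S P).

(* Main.v *)
Require Import Defs.
From HB Require Import structures.
From mathcomp Require Import all_boot all_order all_algebra.
From mathcomp Require Import reals complex.
From mathcomp Require Import mpoly.
From mathcomp Require Import ring lra.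
From Stdlib Require Import FunctionalExtensionality.
Set Implicit Arguments. Unset Strict Implicit. Unset Printing Implicit Defensive.
Import Order.TTheory GRing.Theory Num.Theory.
Local Open Scope ring_scope.

Section Geo.
Local Open Scope complex_scope.
Variable R : realType.
Local Notation nc := (@Normc.normc R).

Lemma nc_ge0 (x : R[i]) : 0 <= nc x.
Proof. by case: x => a b; rewrite /= sqrtr_ge0. Qed.

Lemma mulJ (x : R[i]) : x * x^* = (nc x ^+ 2)%:C.
Proof.
case: x => a b /=; rewrite sqr_sqrtr; last by rewrite addr_ge0 // sqr_ge0.
apply/eqP; rewrite eq_complex /=; apply/andP; split; apply/eqP.
  by rewrite mulrN opprK !expr2.
by rewrite mulrN mulrC addNr.
Qed.

Lemma ReJ (x : R[i]) : complex.Re (x * x^*) = nc x ^+ 2.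
Proof. by rewrite mulJ. Qed.

Lemma nc_sub_ge (w z : R[i]) : nc w - nc z <= nc (w - z).
Proof.
have := le_normcD (w - z) z; rewrite subrK => h; lra.
Qed.

Lemma vnorm2_ge0 (u : 'cV[R[i]]_2) : 0 <= vnorm2 u.
Proof. by rewrite /vnorm2; apply: sumr_ge0 => i _; rewrite ReJ sqr_ge0. Qed.

Lemma vnorm2_gt0 (u : 'cV[R[i]]_2) : u != 0 -> 0 < vnorm2 u.
Proof.
move=> nz; rewrite lt_def vnorm2_ge0 andbT; apply: contra nz => /eqP h.
apply/eqP/matrixP => i j; rewrite (ord1 j) mxE.
have : \sum_(k < 2) complex.Re (u k ord0 * (u k ord0)^*) = 0 by [].
move/eqP; rewrite psumr_eq0; last by move=> k _; rewrite ReJ sqr_ge0.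
move/allP/(_ i (mem_index_enum _)); rewrite ReJ sqrf_eq0 => /eqP /Normc.eq0_normc.
by [].
Qed.

Lemma vnorm2Z (z : R[i]) (u : 'cV[R[i]]_2) : vnorm2 (z *: u) = nc z ^+ 2 * vnorm2 u.
Proof.
rewrite /vnorm2 mulr_sumr; apply: eq_bigr => i _.
by rewrite mxE !ReJ Normc.normcM exprMn.
Qed.

Lemma det2 (F : comNzRingType) (M : 'M[F]_2) :
  \det M = M ord0 ord0 * M ord_max ord_max - M ord0 ord_max * M ord_max ord0.
Proof.
rewrite (expand_det_row _ ord0) !big_ord_recl big_ord0 addr0 /cofactor !det_mx11.
rewrite /= !mxE /=.
have e1 : forall j : 'I_1, lift ord0 j = ord_max :> 'I_2 by move=> j; apply/val_inj; rewrite /= (ord1 j).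
have e2 : forall j : 'I_1, lift (lift ord0 ord0) j = ord0 :> 'I_2 by move=> j; apply/val_inj; rewrite /= (ord1 j).
by rewrite !e2 !e1 /bump /= expr0 expr1 mul1r mulN1r mulrN.
Qed.

Lemma tr2 (F : comNzRingType) (M : 'M[F]_2) :
  \tr M = M ord0 ord0 + M ord_max ord_max.
Proof.
rewrite /mxtrace !big_ord_recl big_ord0 addr0.
by have -> : lift ord0 (ord0 : 'I_1) = ord_max :> 'I_2 by apply/val_inj.
Qed.

Lemma eig_bound (A : 'M[R[i]]_2) (z : R[i]) :
  mx_norm_lt1 A -> z ^+ 2 - \tr A * z + \det A = 0 -> nc z <= 1.
Proof.
move=> [r [r0 [r1 hA]]] hz.
have hd : \det (A - z%:M) == 0.
  apply/eqP; rewrite -[RHS]hz det2 !mxE !eqxx /= mulr0n mulr1n tr2 det2.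
  ring.
have := hd; rewrite -det_tr => /det0P [v vnz hv].
pose u := v^T.
have hu : A *m u = z *: u.
  apply/eqP; rewrite -subr_eq0; apply/eqP.
  have : ((A - z%:M) *m u) = 0.
    by apply: trmx_inj; rewrite trmx_mul trmxK hv trmx0.
  by rewrite mulmxBl mul_scalar_mx.
have unz : u != 0 by apply: contra vnz => /eqP h; apply/eqP/trmx_inj; rewrite trmx0.
have := hA u; rewrite hu vnorm2Z sqrtrM ?sqr_ge0 // sqrtr_sqr ger0_norm ?nc_ge0 //.
have : 0 < Num.sqrt (vnorm2 u) by rewrite sqrtr_gt0 vnorm2_gt0.
move=> hp h; rewrite -(ler_pM2r hp) mul1r. apply: le_trans h _.
by rewrite -[X in _ <= X]mul1r ler_pM2r //; lra.
Qed.


Lemma quad_roots (t d : R[i]) : exists z1 z2 : R[i], z1 + z2 = t /\ z1 * z2 = d.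
Proof.
pose q := sqrtc (t ^+ 2 - 4%:R * d).
have hq : q ^+ 2 = t ^+ 2 - 4%:R * d by rewrite sqr_sqrtc.
have h2 : (2%:R : R[i]) != 0 by rewrite pnatr_eq0.
exists ((t + q) / 2%:R), ((t - q) / 2%:R); split.
  by field.
rewrite -[d](_ : (t ^+ 2 - q ^+ 2) / 4%:R = d); first by field.
by rewrite hq; field.
Qed.

Lemma pent_gamma (A : 'M[R[i]]_2) : mx_norm_lt1 A ->
  exists z1 z2 : R[i], nc z1 <= 1 /\ nc z2 <= 1 /\ z1 + z2 = \tr A /\ z1 * z2 = \det A.
Proof.
move=> hA; have [z1 [z2 [hs hp]]] := quad_roots (\tr A) (\det A).
exists z1, z2; split; last split; try by [].
  apply: (eig_bound hA); rewrite -hs -hp; ring.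
apply: (eig_bound hA); rewrite -hs -hp; ring.
Qed.

Lemma root_bound (s p w : R[i]) :
  (forall e : R, 0 < e -> exists z1 z2 : R[i], nc z1 <= 1 /\ nc z2 <= 1 /\
      nc (s - (z1 + z2)) < e /\ nc (p - z1 * z2) < e) ->
  w ^+ 2 - s * w + p = 0 -> nc w <= 1.
Proof.
move=> H hw; rewrite leNgt; apply/negP => hlt.
set d0 := nc w - 1.
have d0p : 0 < d0 by rewrite /d0; lra.
have wp : 0 < nc w + 1 by have := nc_ge0 w; lra.
have [z1 [z2 [h1 [h2 [hs hp]]]]] := H (d0 ^+ 2 / (nc w + 1)) (divr_gt0 (exprn_gt0 2 d0p) wp).
have eq : (w - z1) * (w - z2) = (s - (z1 + z2)) * w - (p - z1 * z2).
  have : (w - z1) * (w - z2) - ((s - (z1 + z2)) * w - (p - z1 * z2)) = w ^+ 2 - s * w + p by ring.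
  by rewrite hw => /eqP; rewrite subr_eq0 => /eqP.
have hup : nc ((w - z1) * (w - z2)) < d0 ^+ 2.
  rewrite eq; apply: (le_lt_trans (le_normcD _ _)); rewrite normcN Normc.normcM.
  have := nc_ge0 w; have := nc_ge0 (s - (z1 + z2)).
  set e := d0 ^+ 2 / (nc w + 1) in hs hp.
  have he : e * (nc w + 1) = d0 ^+ 2 by rewrite /e mulfVK // gt_eqF.
  move=> a b; nra.
have hlow : d0 ^+ 2 <= nc ((w - z1) * (w - z2)).
  rewrite Normc.normcM expr2.
  have := nc_sub_ge w z1; have := nc_sub_ge w z2.
  rewrite /d0 => a b; apply: ler_pM; lra.
by have := lt_le_trans hup hlow; rewrite ltxx.
Qed.

Lemma closure_gamma (v : 'I_3 -> R[i]) : pentablock_closure v ->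
  Gamma (fun j : 'I_2 => v (lift ord0 j)).
Proof.
move=> hv.
set s := v (lift ord0 ord0); set p := v (lift ord0 ord_max).
have H : forall e : R, 0 < e -> exists z1 z2 : R[i], nc z1 <= 1 /\ nc z2 <= 1 /\
      nc (s - (z1 + z2)) < e /\ nc (p - z1 * z2) < e.
  move=> e e0; have [w [[A [hA [_ [h1 h2]]]] hw]] := hv e e0.
  have [z1 [z2 [n1 [n2 [hs hp]]]]] := pent_gamma hA.
  exists z1, z2; do 2 split => //; rewrite hs hp -h1 -h2; split; first exact: hw.
  rewrite /p; have -> : lift ord0 (ord_max : 'I_2) = ord_max :> 'I_3 by apply/val_inj.
  exact: hw.
have [y1 [y2 [hs hp]]] := quad_roots s p.
exists y1, y2; split; last split; last split; try by [].
  by apply: (root_bound H); rewrite -hs -hp; ring.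
by apply: (root_bound H); rewrite -hs -hp; ring.
Qed.

Lemma ord3_cases (i : 'I_3) : i = ord0 \/ i = lift ord0 ord0 \/ i = ord_max.
Proof.
case: i => [[|[|[|k]]] hi].
- by left; apply/val_inj.
- by right; left; apply/val_inj.
- by right; right; apply/val_inj.
- by [].
Qed.

Lemma ncR (r : R) : 0 <= r -> nc r%:C = r.
Proof. by move=> r0; rewrite /= expr0n addr0 sqrtr_sqr ger0_norm. Qed.

Lemma gamma_closure (v : 'I_3 -> R[i]) : v ord0 = 0 ->
  Gamma (fun j : 'I_2 => v (lift ord0 j)) -> pentablock_closure v.
Proof.
move=> v0 [z1 [z2 [n1 [n2 [hs hp]]]]] e e0.
pose m := Num.min e 1.
have m0 : 0 < m by rewrite /m lt_min e0 ltr01.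
have m1 : m <= 1 by rewrite /m ge_min lexx orbT.
have me : m <= e by rewrite /m ge_min lexx.
pose r := 1 - m / 4%:R.
have r0 : 0 <= r by rewrite /r; lra.
have r1 : r < 1 by rewrite /r; lra.
pose c := r%:C.
pose A : 'M[R[i]]_2 := \matrix_(i, j) if i == j then (if i == ord0 then c * z1 else c * z2) else 0.
have A00 : A ord0 ord0 = c * z1 by rewrite mxE.
have A11 : A ord_max ord_max = c * z2 by rewrite mxE.
have A01 : A ord0 ord_max = 0 by rewrite mxE.
have A10 : A ord_max ord0 = 0 by rewrite mxE.
pose w : 'I_3 -> R[i] := fun i => if val i == 0%N then 0 else if val i == 1%N then \tr A else \det A.
exists w; split.
  exists A; split; last first.
    split; first by rewrite /w /=; have -> : lift ord0 (ord0 : 'I_1) = ord_max :> 'I_2 by apply/val_inj.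
    by split.
  exists r; split => //; split => // u.
  have hAu : vnorm2 (A *m u) <= r ^+ 2 * vnorm2 u.
    rewrite /vnorm2 !big_ord_recl !big_ord0 !addr0 !mxE !big_ord_recl !big_ord0 !addr0.
    have e1 : lift ord0 (ord0 : 'I_1) = ord_max :> 'I_2 by apply/val_inj.
    rewrite e1 A00 A11 A01 A10 !mul0r !addr0 add0r !ReJ !Normc.normcM ncR //.
    have := nc_ge0 (u ord0 ord0); have := nc_ge0 (u ord_max ord0).
    move=> a b; rewrite !exprMn mulrDr.
    have k : forall x y : R, 0 <= x -> x <= 1 -> r ^+ 2 * x ^+ 2 * y ^+ 2 <= r ^+ 2 * y ^+ 2.
      move=> x y x0 x1; have hx : x ^+ 2 <= 1 by rewrite expr_le1.
      have hy : 0 <= r ^+ 2 * y ^+ 2 by rewrite mulr_ge0 ?sqr_ge0.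
      have hx' : 0 <= 1 - x ^+ 2 by rewrite subr_ge0.
      have := mulr_ge0 hy hx'; nra.
    by apply: lerD; apply: k; rewrite ?nc_ge0.
  apply: (le_trans (y := Num.sqrt (r ^+ 2 * vnorm2 u))).
    by rewrite ler_sqrt // mulr_ge0 ?sqr_ge0 ?vnorm2_ge0.
  by rewrite sqrtrM ?sqr_ge0 // sqrtr_sqr ger0_norm.
move=> i; have [->|[->|->]] := ord3_cases i.
- by have -> : w ord0 = 0 by []; rewrite v0 subr0 Normc.normc0.
- rewrite /w /= tr2 A00 A11 -mulrDr hs.
  have -> : z1 + z2 - c * (z1 + z2) = (1 - r)%:C * (z1 + z2).
    by rewrite /c [in RHS]rmorphB rmorph1 mulrBl mul1r.
  rewrite Normc.normcM ncR; last lra.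
  have : nc (z1 + z2) <= 2%:R.
    apply: le_trans (le_normcD _ _) _.
    by have := lerD n1 n2; rewrite -[1 + 1]/(2%:R).
  move=> h; have : (1 - r) * nc (z1 + z2) <= (1 - r) * 2%:R.
    by rewrite ler_pM2l //; lra.
  rewrite /r; lra.
- rewrite /w /= det2 A00 A11 A01 A10 mulr0 subr0.
  have e2 : lift ord0 (ord_max : 'I_2) = ord_max :> 'I_3 by apply/val_inj.
  rewrite -e2 hp.
  have -> : z1 * z2 - c * z1 * (c * z2) = (1 - r ^+ 2)%:C * (z1 * z2).
    by rewrite rmorphB rmorph1 expr2 rmorphM /c; ring.
  rewrite Normc.normcM ncR; last by rewrite subr_ge0 expr_le1 // ltW.
  have : nc (z1 * z2) <= 1.
    rewrite Normc.normcM; rewrite -[X in _ <= X]mul1r; apply: ler_pM; rewrite ?nc_ge0 //.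
  move=> h; have : (1 - r ^+ 2) * nc (z1 * z2) <= (1 - r ^+ 2).
    rewrite -[X in _ <= X]mulr1 ler_pM2l //; rewrite subr_gt0 expr_lt1 //.
  rewrite /r; nra.
Qed.

End Geo.

Section Kos.
Variable n : nat.

Definition up (S : {set 'I_n}) : {set 'I_n.+1} := lift ord0 @: S.
Definition rest (T : {set 'I_n.+1}) : {set 'I_n} := [set j | lift ord0 j \in T].
Definition recon (b : bool) (S : {set 'I_n}) : {set 'I_n.+1} := if b then ord0 |: up S else up S.

Lemma mem_up (S : {set 'I_n}) j : (lift ord0 j \in up S) = (j \in S).
Proof. by rewrite mem_imset //; apply: lift_inj. Qed.

Lemma mem0_up (S : {set 'I_n}) : (ord0 \in up S) = false.
Proof. by apply/imsetP => [[x _ hx]]; have := neq_lift ord0 x; rewrite -hx eqxx. Qed.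

Lemma mem0_recon b (S : {set 'I_n}) : (ord0 \in recon b S) = b.
Proof. by case: b; rewrite /recon ?in_setU1 ?eqxx ?mem0_up. Qed.

Lemma rest_recon b (S : {set 'I_n}) : rest (recon b S) = S.
Proof.
apply/setP => j; rewrite /rest inE /recon; case: b; rewrite ?in_setU1 mem_up //.
Qed.

Lemma recon_rest (T : {set 'I_n.+1}) : recon (ord0 \in T) (rest T) = T.
Proof.
apply/setP => i; rewrite /recon; case: (unliftP ord0 i) => [j ->|->].
  case: (ord0 \in T); rewrite ?in_setU1 mem_up inE //; rewrite eq_sym (negbTE (neq_lift _ _)) //.
by case h: (ord0 \in T); rewrite ?in_setU1 ?eqxx ?mem0_up.
Qed.

Lemma rest_D1 (T : {set 'I_n.+1}) j : rest (T :\ lift ord0 j) = rest T :\ j.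
Proof. by apply/setP => k; rewrite !inE (inj_eq (@lift_inj _ ord0)). Qed.

Lemma mem0_D1 (T : {set 'I_n.+1}) j : (ord0 \in T :\ lift ord0 j) = (ord0 \in T).
Proof. by rewrite !inE neq_lift. Qed.

Lemma rest_U0 (T : {set 'I_n.+1}) : rest (ord0 |: T) = rest T.
Proof. by apply/setP => k; rewrite !inE eq_sym (negbTE (neq_lift _ _)). Qed.

Lemma cardE' m (A : {set 'I_m}) : #|A| = (\sum_(k < m) (k \in A : nat))%N.
Proof. by rewrite -sum1_card big_mkcond /=; apply: eq_bigr => k _; case: (k \in A). Qed.

Lemma card_lt (T : {set 'I_n.+1}) (j : 'I_n) : #|[set k in T | (k < lift ord0 j)%N]| =
  ((@ord0 n \in T) + #|[set k in rest T | (k < j)%N]|)%N.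
Proof.
rewrite !cardE' big_ord_recl !inE /= /bump /=; congr (_ + _)%N.
  by case: (ord0 \in T).
by apply: eq_bigr => k _; rewrite !inE /bump /= !add1n ltnS.
Qed.

Lemma card_lt0 (T : {set 'I_n.+1}) : #|[set k in T | (k < @ord0 n)%N]| = 0%N.
Proof. by apply/eqP; rewrite cards_eq0; apply/eqP/setP => k; rewrite !inE ltn0 andbF. Qed.

End Kos.

Section Kos2.
Variables (R : realType) (H : lmodType R[i]) (n : nat).

Definition lin_ops m (A : 'I_m -> H -> H) := forall i (a : R[i]) x, A i (a *: x) = a *: A i x.

Lemma sgn2 (b : bool) (x : H) : ((-1) ^+ b : R[i]) *: (((-1) ^+ b : R[i]) *: x) = x.
Proof. by case: b; rewrite ?expr0 ?expr1 ?scale1r ?scaleN1r ?opprK. Qed.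

Lemma kd_scale m (B : 'I_m -> H -> H) (hB : lin_ops B) (a : R[i]) (v : {set 'I_m} -> H) S :
  koszul_d B (fun S => a *: v S) S = a *: koszul_d B v S.
Proof.
rewrite /koszul_d scaler_sumr; apply: eq_bigr => i _.
by rewrite hB !scalerA mulrC.
Qed.

Lemma kd_zero m (B : 'I_m -> H -> H) (hB : lin_ops B) S :
  koszul_d B (fun _ => 0) S = 0.
Proof.
by have := kd_scale hB 0 (fun _ => 0) S; rewrite !scale0r.
Qed.

Lemma kd_split (A : 'I_n.+1 -> H -> H) (hA0 : forall x, A ord0 x = 0) w T :
  koszul_d A w T = ((-1) ^+ (ord0 \in T) : R[i]) *:
    koszul_d (fun j : 'I_n => A (lift ord0 j)) (fun S => w (recon (ord0 \in T) S)) (rest T).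
Proof.
rewrite /koszul_d big_mkcond big_ord_recl hA0 (scaler0 _ ((-1) ^+ _)) if_same Monoid.mul1m.
rewrite scaler_sumr [in RHS]big_mkcond; apply: eq_bigr => j _.
rewrite [j \in rest T]inE; case: (lift ord0 j \in T); last by [].
rewrite card_lt exprD scalerA -rest_D1 -[ord0 \in T](mem0_D1 T j) recon_rest.
by rewrite (mem0_D1 T j).
Qed.


Lemma kz_zero (A : 'I_n.+1 -> H -> H) (hA0 : forall x, A ord0 x = 0) (hA : lin_ops A) :
  koszul_exact A <-> koszul_exact (fun j : 'I_n => A (lift ord0 j)).
Proof.
have hA' : lin_ops (fun j : 'I_n => A (lift ord0 j)) by move=> i a x; apply: hA.
split.
- move=> hK w hw.
  pose W (T : {set 'I_n.+1}) := if ord0 \in T then 0 else w (rest T).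
  have hW : koszul_d A W = (fun _ => 0).
    apply: functional_extensionality => T; rewrite kd_split //.
    case hb: (ord0 \in T).
      have -> : (fun S => W (recon true S)) = (fun _ => 0).
        by apply: functional_extensionality => S; rewrite /W mem0_recon.
      by rewrite kd_zero // scaler0.
    have -> : (fun S => W (recon false S)) = w.
      by apply: functional_extensionality => S; rewrite /W mem0_recon rest_recon.
    by rewrite hw scaler0.
  have [v hv] := hK W hW.
  exists (fun S => v (recon false S)); apply: functional_extensionality => S.
  have := equal_f hv (recon false S); rewrite kd_split //.
  by rewrite mem0_recon rest_recon expr0 scale1r /W mem0_recon rest_recon.
- move=> hK w hw.
  have key : forall b, exists vb, koszul_d (fun j : 'I_n => A (lift ord0 j)) vb = (fun S => w (recon b S)).
    move=> b; apply: hK; apply: functional_extensionality => S.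
    have := equal_f hw (recon b S); rewrite kd_split //.
    rewrite mem0_recon rest_recon => h.
    by rewrite -(sgn2 b (koszul_d _ _ _)) h scaler0.
  have [v0 h0] := key false; have [v1 h1] := key true.
  pose V b := if b then v1 else v0.
  have hV : forall b, koszul_d (fun j : 'I_n => A (lift ord0 j)) (V b) = (fun S => w (recon b S)).
    by case.
  exists (fun T : {set 'I_n.+1} => ((-1) ^+ (ord0 \in T) : R[i]) *: V (ord0 \in T) (rest T)).
  apply: functional_extensionality => T; rewrite kd_split //.
  have -> : (fun S => ((-1) ^+ (ord0 \in recon (ord0 \in T) S) : R[i]) *:
      V (ord0 \in recon (ord0 \in T) S) (rest (recon (ord0 \in T) S))) =
      (fun S => ((-1) ^+ (ord0 \in T) : R[i]) *: V (ord0 \in T) S).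
    by apply: functional_extensionality => S; rewrite mem0_recon rest_recon.
  by rewrite kd_scale // sgn2 hV recon_rest.
Qed.

Lemma sum_recl (F : 'I_n.+1 -> H) : \sum_(i < n.+1) F i = F ord0 + \sum_(i < n) F (lift ord0 i).
Proof. exact: big_ord_recl. Qed.

Lemma kz_unit (A : 'I_n.+1 -> H -> H) (c : R[i]) (c0 : c != 0)
  (hA0 : forall x, A ord0 x = c *: x) (hA : lin_ops A) : koszul_exact A.
Proof.
have A0 : forall i, A i 0 = 0.
  by move=> i; have := hA i 0 0; rewrite !scale0r.
move=> w hw.
exists (fun S : {set 'I_n.+1} => if ord0 \in S then 0 else c^-1 *: w (ord0 |: S)).
apply: functional_extensionality => S.
rewrite /koszul_d big_mkcond sum_recl.
case hS: (ord0 \in S).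
  rewrite card_lt0 expr0 scale1r !inE eqxx /= setD1K // hA hA0 scalerA mulVf // scale1r.
  rewrite big1 ?addr0 // => j _.
  by case: (lift ord0 j \in S); rewrite // mem0_D1 hS A0 (scaler0 _ ((-1) ^+ _)).
rewrite add0r.
have := equal_f hw (ord0 |: S).
rewrite /koszul_d big_mkcond sum_recl setU11 card_lt0 expr0 scale1r.
have -> : (ord0 |: S) :\ ord0 = S.
  by apply/setP => k; rewrite !inE; case: eqP => // ->; rewrite hS.
rewrite hA0 => /eqP; rewrite addr_eq0 => /eqP hw'.
rewrite [w S](_ : _ = c^-1 *: (c *: w S)); last by rewrite scalerA mulVf ?scale1r.
rewrite hw' -sumrN scaler_sumr.
apply: eq_bigr => j _.
rewrite in_setU1 eq_sym (negbTE (neq_lift _ _)) /=.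
case: (lift ord0 j \in S); last by rewrite oppr0 (scaler0 _ c^-1).
have -> : (ord0 |: S) :\ lift ord0 j = ord0 |: (S :\ lift ord0 j).
  by apply/setP => k; rewrite !inE; case: eqP => // ->; rewrite eq_sym (negbTE (neq_lift _ _)).
rewrite !card_lt !inE eqxx hS rest_U0 /= add0n add1n hA exprS scalerN -scaleNr !scalerA.
by congr (_ *: _); rewrite mulN1r mulrN mulNr opprK mulrC.
Qed.

End Kos2.

Section Pol.
Variables (R : realType) (H : lmodType R[i]).

Lemma poly_op_seq n (p : {mpoly R[i][n]}) (T : 'I_n -> H -> H) x (s : seq 'X_{1..n}) :
  uniq s -> {subset msupp p <= s} ->
  poly_op p T x = \sum_(m <- s) p@_m *: mono_op T m x.
Proof.
move=> us sub; rewrite /poly_op [RHS](bigID (fun m => m \in msupp p)) /=.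
rewrite [X in _ + X]big1 ?addr0; last first.
  by move=> m /memN_msupp_eq0 ->; rewrite scale0r.
rewrite -[RHS]big_filter; apply: perm_big; apply: uniq_perm.
- exact: msupp_uniq.
- exact: filter_uniq.
- by move=> m; rewrite mem_filter; case h: (m \in msupp p); rewrite ?(sub _ h).
Qed.

Lemma poly_op0 n (T : 'I_n -> H -> H) x : poly_op (0 : {mpoly R[i][n]}) T x = 0.
Proof.
have h0 : msupp (0 : {mpoly R[i][n]}) = [::] by apply/eqP; rewrite msupp_eq0.
by rewrite /poly_op h0 big_nil.
Qed.


Lemma poly_opD n (p q : {mpoly R[i][n]}) (T : 'I_n -> H -> H) x :
  poly_op (p + q) T x = poly_op p T x + poly_op q T x.
Proof.
pose s := undup (msupp p ++ msupp q).
have us : uniq s := undup_uniq _.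
have sp : {subset msupp p <= s} by move=> m h; rewrite mem_undup mem_cat h.
have sq : {subset msupp q <= s} by move=> m h; rewrite mem_undup mem_cat h orbT.
have spq : {subset msupp (p + q) <= s} by move=> m /msuppD_le h; rewrite mem_undup.
rewrite !(poly_op_seq _ _ us) // -big_split /=; apply: eq_bigr => m _.
by rewrite mcoeffD scalerDl.
Qed.

Lemma poly_opZ n (c : R[i]) (p : {mpoly R[i][n]}) (T : 'I_n -> H -> H) x :
  poly_op (c *: p) T x = c *: poly_op p T x.
Proof.
rewrite (poly_op_seq _ _ (msupp_uniq p)); last exact: msuppZ_le.
rewrite /poly_op scaler_sumr; apply: eq_bigr => m _.
by rewrite mcoeffZ scalerA.
Qed.

Lemma poly_op_sum n (I : Type) (r : seq I) (F : I -> {mpoly R[i][n]}) (T : 'I_n -> H -> H) x :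
  poly_op (\sum_(k <- r) F k) T x = \sum_(k <- r) poly_op (F k) T x.
Proof.
elim: r => [|a r IH]; first by rewrite !big_nil poly_op0.
by rewrite !big_cons poly_opD IH.
Qed.

Lemma poly_opX n (m : 'X_{1..n}) (T : 'I_n -> H -> H) x :
  poly_op 'X_[m] T x = mono_op T m x.
Proof. by rewrite /poly_op msuppX big_seq1 mcoeffX eqxx scale1r. Qed.

Definition mtail n (m : 'X_{1..n.+1}) : 'X_{1..n} := [multinom m (lift ord0 j) | j < n].
Definition mext n (m : 'X_{1..n}) : 'X_{1..n.+1} :=
  [multinom (if unlift ord0 i is Some j then m j else 0%N) | i < n.+1].

Lemma mtail_ext n (m : 'X_{1..n}) : mtail (mext m) = m.
Proof. by apply/mnmP => j; rewrite !mnmE liftK. Qed.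

Lemma mext0 n (m : 'X_{1..n}) : mext m ord0 = 0%N.
Proof. by rewrite mnmE unlift_none. Qed.

Lemma mono_op_split n (T : 'I_n.+1 -> H -> H) (m : 'X_{1..n.+1}) x :
  mono_op T m x = iter (m ord0) (T ord0) (mono_op (fun j => T (lift ord0 j)) (mtail m) x).
Proof.
rewrite /mono_op enum_ordSl /= foldr_map; congr (iter _ _ _).
have -> : (fun i y => iter (mtail m i) (T (lift ord0 i)) y) =
          (fun i y => iter (m (lift ord0 i)) (T (lift ord0 i)) y).
  by apply: functional_extensionality => i; rewrite /mtail mnmE.
by [].
Qed.


Definition dropp n (p : {mpoly R[i][n.+1]}) : {mpoly R[i][n]} :=
  \sum_(m <- msupp p) p@_m *: (if m ord0 == 0%N then 'X_[mtail m] else 0).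
Definition liftp n (p : {mpoly R[i][n]}) : {mpoly R[i][n.+1]} :=
  \sum_(m <- msupp p) p@_m *: 'X_[mext m].
Definition ext0 n (z : 'I_n -> R[i]) : 'I_n.+1 -> R[i] :=
  fun i => if unlift ord0 i is Some j then z j else 0.

Lemma dropp_eval n (p : {mpoly R[i][n.+1]}) z : (dropp p).@[z] = p.@[ext0 z].
Proof.
rewrite /dropp raddf_sum mevalE; apply: eq_bigr => m _.
rewrite /= mevalZ big_ord_recl /ext0 unlift_none; congr (_ * _).
case: eqP => h.
  rewrite mevalX h expr0 mul1r; apply: eq_bigr => j _.
  by rewrite liftK /mtail mnmE.
by rewrite meval0 expr0n; move/eqP/negbTE: h => ->; rewrite mul0r.
Qed.

Lemma dropp_op n (p : {mpoly R[i][n.+1]}) (T : 'I_n.+1 -> H -> H) x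
  (hT0 : forall y, T ord0 y = 0) :
  poly_op (dropp p) (fun j => T (lift ord0 j)) x = poly_op p T x.
Proof.
rewrite /dropp poly_op_sum; apply: eq_bigr => m _.
rewrite poly_opZ mono_op_split; congr (_ *: _).
case: eqP => h; first by rewrite poly_opX h.
rewrite poly_op0; case: (m ord0) h => // k _.
by rewrite iterS hT0.
Qed.

Lemma liftp_eval n (p : {mpoly R[i][n]}) v : (liftp p).@[v] = p.@[fun j => v (lift ord0 j)].
Proof.
rewrite /liftp raddf_sum mevalE; apply: eq_bigr => m _.
rewrite /= mevalZ mevalX big_ord_recl mext0 expr0 mul1r; congr (_ * _).
by apply: eq_bigr => j _; rewrite /mext mnmE liftK.
Qed.

Lemma liftp_op n (p : {mpoly R[i][n]}) (T : 'I_n.+1 -> H -> H) x :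
  poly_op (liftp p) T x = poly_op p (fun j => T (lift ord0 j)) x.
Proof.
rewrite /liftp poly_op_sum; apply: eq_bigr => m _.
by rewrite poly_opZ poly_opX mono_op_split mext0 mtail_ext.
Qed.

End Pol.

Section Main.
Variables (R : realType) (H : lmodType R[i]) (hs : hilbert_space H).

Lemma op0 (T : H -> H) : is_bounded_op hs T -> T 0 = 0.
Proof.
move=> [h _]; have := h 1 0 0; rewrite !scale1r addr0 => e.
by apply: (@addrI _ (T 0)); rewrite addr0 -{1}e.
Qed.

Lemma opZ (T : H -> H) : is_bounded_op hs T -> forall a x, T (a *: x) = a *: T x.
Proof.
move=> hT a x; have := hT.1 a x 0; rewrite !addr0 => ->.
by rewrite op0 // addr0.
Qed.

Lemma hnorm0 : hnorm hs 0 = 0.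
Proof.
have e : ip hs 0 0 = 0.
  have := ip_linl hs 1 0 0 0; rewrite !scale1r addr0 mul1r => e.
  by apply: (@addrI _ (ip hs 0 0)); rewrite addr0 -{1}e.
by rewrite /hnorm e /= sqrtr0.
Qed.

Lemma zero_bounded : is_bounded_op hs (fun _ => 0).
Proof.
split; first by move=> a x y; rewrite scaler0 addr0.
by exists 0 => x; rewrite hnorm0 mul0r.
Qed.

Variables (S P : H -> H).
Hypothesis hc : commuting_tuple hs (pair_op S P).

Local Notation triple := (triple_op (fun _ : H => 0) S P).

Lemma F2 : (fun j : 'I_2 => triple (lift ord0 j)) = pair_op S P.
Proof.
apply: functional_extensionality => j.
by case: j => [[|[|k]] hj] //.
Qed.

Lemma F2' j y : triple (lift ord0 j) y = pair_op S P j y.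
Proof. by rewrite -F2. Qed.

Lemma triple_comm : commuting_tuple hs triple.
Proof.
case: hc => hb hcm; split.
  move=> i; case: (unliftP ord0 i) => [j ->|->]; last exact: zero_bounded.
  by rewrite (equal_f F2 j); apply: hb.
move=> i j x.
case: (unliftP ord0 i) => [i' ->|->]; case: (unliftP ord0 j) => [j' ->|->] //=.
- by rewrite !F2' hcm.
- by have t0 : forall y, triple ord0 y = 0 by []; rewrite !t0 !F2' (op0 (hb _)).
- by have t0 : forall y, triple ord0 y = 0 by []; rewrite !t0 !F2' (op0 (hb _)).
Qed.

Definition shift n (T : 'I_n -> H -> H) (lam : 'I_n -> R[i]) := fun i x => T i x - lam i *: x.

Lemma shift_lin n (T : 'I_n -> H -> H) lam : commuting_tuple hs T -> lin_ops (shift T lam).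
Proof.
by move=> [hb _] i a x; rewrite /shift (opZ (hb i)) scalerBr !scalerA mulrC.
Qed.

Lemma shift_split (lam : 'I_3 -> R[i]) :
  (fun j : 'I_2 => shift triple lam (lift ord0 j)) = shift (pair_op S P) (fun j => lam (lift ord0 j)).
Proof.
apply: functional_extensionality => j; apply: functional_extensionality => y.
by rewrite /shift F2'.
Qed.

Lemma spec_equiv (lam : 'I_3 -> R[i]) : lam ord0 = 0 ->
  (taylor_spectrum triple lam <-> taylor_spectrum (pair_op S P) (fun j => lam (lift ord0 j))).
Proof.
move=> l0; rewrite /taylor_spectrum.
have := @kz_zero R H 2 (shift triple lam).
rewrite shift_split => h.
have e : koszul_exact (fun i x => triple i x - lam i *: x) <->
  koszul_exact (shift (pair_op S P) (fun j => lam (lift ord0 j))).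
  apply: h; last exact: shift_lin triple_comm.
  by move=> x; rewrite /shift l0 scale0r subr0.
by split => hn he; apply: hn; apply e.
Qed.

Lemma spec_ord0 (lam : 'I_3 -> R[i]) : taylor_spectrum triple lam -> lam ord0 = 0.
Proof.
move=> hsp; apply/eqP; apply/negPn/negP => nz; apply: hsp.
apply: (@kz_unit R H 2 (shift triple lam) (- lam ord0)).
- by rewrite oppr_eq0.
- by move=> x; rewrite /shift /= sub0r scaleNr.
- exact: shift_lin triple_comm.
Qed.

End Main.

Unset Implicit Arguments.
Theorem mainTheorem12 (R : realType) (H : lmodType R[i]) (hs : hilbert_space H)
  (S P : H -> H) :
  commuting_tuple hs (pair_op S P) ->
  (gamma_contraction hs S P <-> penta_contraction hs (fun _ => 0) S P).
Proof.
move=> hc; split.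
- move=> [_ [gsp gnorm]]; split; first exact: triple_comm hc.
  split.
  + move=> lam hl; have l0 := spec_ord0 hc hl.
    apply: (gamma_closure l0); apply: gsp.
    by apply/(spec_equiv hc l0).
  + move=> p q hq Qinv hQ M hM x.
    have dp : forall (p' : {mpoly R[i][3]}) y,
        poly_op (dropp p') (pair_op S P) y = poly_op p' (triple_op (fun _ : H => 0) S P) y.
      by move=> p' y; rewrite -(F2 S P); apply: dropp_op.
    have ext_in : forall z : 'I_2 -> R[i], Gamma z -> pentablock_closure (ext0 z).
      move=> z hz; apply: gamma_closure; first by rewrite /ext0 unlift_none.
      have -> : (fun j : 'I_2 => ext0 z (lift ord0 j)) = z.
        by apply: functional_extensionality => j; rewrite /ext0 liftK.
      exact: hz.
    rewrite -dp; apply: (gnorm (dropp p) (dropp q)).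
    * by move=> z hz; rewrite dropp_eval; apply: hq; apply: ext_in.
    * by move=> y; rewrite !dp; apply: hQ.
    * by move=> z hz; rewrite !dropp_eval; apply: hM; apply: ext_in.
- move=> [_ [psp pnorm]]; split => //; split.
  + move=> lam2 hl; pose lam := ext0 lam2.
    have l0 : lam ord0 = 0 by rewrite /lam /ext0 unlift_none.
    have e : (fun j => lam (lift ord0 j)) = lam2.
      by apply: functional_extensionality => j; rewrite /lam /ext0 liftK.
    rewrite -e; apply: closure_gamma; apply: psp.
    by apply/(spec_equiv hc l0); rewrite e.
  + move=> p q hq Qinv hQ M hM x.
    have lp : forall (p' : {mpoly R[i][2]}) y,
        poly_op (liftp p') (triple_op (fun _ : H => 0) S P) y = poly_op p' (pair_op S P) y.
      by move=> p' y; rewrite liftp_op (F2 S P).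
    rewrite -lp; apply: (pnorm (liftp p) (liftp q)).
    * by move=> v hv; rewrite liftp_eval; apply: hq; apply: closure_gamma.
    * by move=> y; rewrite !lp; apply: hQ.
    * by move=> v hv; rewrite !liftp_eval; apply: hM; apply: closure_gamma.
Qed.
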